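(* Let $\gamma>0$ and let $H$ be a $3$-graph of order $n$ with $\delta_2(H)\ge(1/2-\gamma)n$. Suppose $X,Y$ is a bipartition of $V(H)$. Let $x,x'\in X$ and $y_1,y_2\in Y$ be such that $xy_1y_2,\,xx'y_1,\,xx'y_2\in E(H)$. Then at least one of the following holds: (a) $\{x,x',y_1,y_2\}$ is contained in at least $\gamma n/4$ $5$-sets that span $(X,Y)$-bridges of length $1$; (b) there are at least $\gamma n/4$ copies $K$ of $K_4^3$ in $H$ with $|V(K)\cap X|=2=|V(K)\cap Y|$ and $|V(K)\cap\{x,x',y_1,y_2\}|=3$; (c) $(1/2-15\gamma/4)n\le|X|,|Y|\le(1/2+15\gamma/4)n$ and $xx'y_1$ is $(26\gamma,X,Y)$-typical.
   Context: $\delta_2(H)$ is the minimum over pairs of distinct vertices of the number of edges containing the pair. $K_4^3$ is the complete $3$-graph on $4$ vertices (copies counted as $4$-sets all of whose triples are edges); $K_4^-$ is the $3$-graph with $4$ vertices and $3$ edges. A set $S$ is an $(x,y)$-connector of length $1$ if $S\cap\{x,y\}=\emptyset$, $|S|=3$, and both $S\cup\{x\}$ and $S\cup\{y\}$ span copies of $K_4^-$ in $H$. A triple $(x_0,y_0,S)$ is an $(X,Y)$-bridge of length $1$ if $x_0\in X$, $y_0\in Y$ and $S$ is an $(x_0,y_0)$-connector of length $1$; a $5$-set $Z$ spans an $(X,Y)$-bridge of length $1$ if $Z=S\cup\{x_0,y_0\}$ for some such bridge. Write $N(uv)$ for the set of $w$ with $uvw\in E(H)$, $N(uv,Z)=N(uv)\cap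 Z$, $\deg(uv,Z)=|N(uv,Z)|$. For $\rho>0$, a triple $xx'y$ with $x,x'\in X$, $y\in Y$ is $(\rho,X,Y)$-typical if (T1) $\deg(xx',Y)\ge|Y|-\rho n$, (T2) $|N(xy,X)\cap N(x'y,X)|\le\rho n$, and (T3) $|X|-\rho n\le\deg(xy,X)+\deg(x'y,X)$. *)

(* Defs.v *)
(* A 3-graph on a finite vertex type T is a set E of
   3-element subsets of T (the edges); n = #|T|. *)
From HB Require Import structures.
From mathcomp Require Import all_boot all_order all_algebra.
Set Implicit Arguments. Unset Strict Implicit. Unset Printing Implicit Defensive.
Import Order.TTheory GRing.Theory Num.Theory.

Section Defs.
Variable T : finType.
Variable E : {set {set T}}.

Definition is_3graph : Prop := forall e, e \in E -> #|e| = 3.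

Definition nbh (u v : T) : {set T} := [set w | [set u; v; w] \in E].

Definition degZ (u v : T) (Z : {set T}) : nat := #|nbh u v :&: Z|.

Definition edges_in (A : {set T}) : nat := #|[set e in E | e \subset A]|.

(* A spans a copy of K_4^- : |A| = 4 and A contains (at least) 3 edges,
   i.e. the 3-graph with 4 vertices and 3 edges is a subgraph of H[A]. *)
Definition spans_K4minus (A : {set T}) : bool :=
  (#|A| == 4) && (3 <= edges_in A).

Definition is_K43 (A : {set T}) : bool :=
  (#|A| == 4) && [forall t : {set T}, (t \subset A) && (#|t| == 3) ==> (t \in E)].

Definition connector1 (x y : T) (S : {set T}) : bool :=
  [&& [disjoint S & [set x; y]], #|S| == 3,
      spans_K4minus (x |: S) & spans_K4minus (y |: S)].

Definition spans_bridge1 (X Y : {set T}) (Z : {set T}) : bool :=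
  [exists x0 in X, exists y0 in Y, exists S : {set T},
     connector1 x0 y0 S && (Z == S :|: [set x0; y0])].
End Defs.

Section Typical.
Variable R : realFieldType.
Local Open Scope ring_scope.

Definition typical (T : finType) (E : {set {set T}}) (rho : R)
    (X Y : {set T}) (x x' y : T) : Prop :=
  let n := #|T|%:R in
  [/\ (#|Y|%:R - rho * n <= (degZ E x x' Y)%:R),
      (#|nbh E x y :&: X :&: (nbh E x' y :&: X)|%:R <= rho * n) &
      (#|X|%:R - rho * n <= (degZ E x y X + degZ E x' y X)%:R)].
End Typical.

(* Main.v *)
Require Import Defs.
From HB Require Import structures.
From mathcomp Require Import all_boot all_order all_algebra.
From mathcomp Require Import zify ring lra.
Import Order.TTheory GRing.Theory Num.Theory.

Module Helpers.
Set Implicit Arguments. Unset Strict Implicit.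

Ltac seteq := apply/setP=> ?; rewrite !inE; do ![case: (_ == _)] => //.

Ltac ne_rw :=
  repeat match goal with
  | H : is_true (?a != ?b) |- context [?a == ?b] => rewrite (negbTE H)
  | H : is_true (?a != ?b) |- context [?b == ?a] => rewrite (eq_sym b a) (negbTE H)
  | H : is_true (?a \notin ?S) |- context [?a \in ?S] => rewrite (negbTE H)
  | H : is_true (?a \in ?S) |- context [?a \in ?S] => rewrite H
  end; rewrite ?eqxx /= ?orbF ?andbF ?orbT ?andbT.

Ltac memcase w :=
  repeat match goal with |- context [w == ?zz] =>
    case: (eqVneq w zz) => [->|?] end; ne_rw; try done.

Section Gen.
Variables (T : finType) (E : {set {set T}}) (hE : is_3graph E).

Lemma card3 {U : finType} {a b c : U} : a != b -> a != c -> b != c -> #|[set a; b; c]| = 3.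
Proof.
move=> ab ac bc; rewrite setUC cardsU1 cards2 ab !inE.
by rewrite (eq_sym c a) (eq_sym c b) (negbTE ac) (negbTE bc).
Qed.

Lemma card4 {U : finType} {a b c d : U} : uniq [:: a; b; c; d] -> #|[set a; b; c; d]| = 4.
Proof.
rewrite /= !inE !negb_or => /andP[/and3P[ab ac ad] /andP[/andP[bc bd] /andP[cd _]]].
rewrite setUC cardsU1 card3 // !inE.
by rewrite (eq_sym d a) (eq_sym d b) (eq_sym d c) (negbTE ad) (negbTE bd) (negbTE cd).
Qed.

Lemma tri_neq a b c : [set a; b; c] \in E -> [&& a != b, a != c & b != c].
Proof.
move=> /hE H; apply/and3P; split; apply/eqP => e; move: H; rewrite e.
- rewrite (_ : [set b; b; c] = [set b; c]) ?cards2; [by case: (_ == _)|seteq].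
- rewrite (_ : [set c; b; c] = [set b; c]) ?cards2; [by case: (_ == _)|seteq].
- rewrite (_ : [set a; c; c] = [set a; c]) ?cards2; [by case: (_ == _)|seteq].
Qed.

Lemma nbh_l u w : u \notin nbh E u w.
Proof. by rewrite inE; apply/negP => /tri_neq; rewrite eqxx /= ?andbF. Qed.
Lemma nbh_r u w : w \notin nbh E u w.
Proof. by rewrite inE; apply/negP => /tri_neq; rewrite eqxx /= ?andbF. Qed.

Lemma set_neq (A B : {set T}) d : d \in B -> d \notin A -> A != B.
Proof. by move=> dB dA; apply/eqP => e; move: dA; rewrite e dB. Qed.

Lemma edges3 (A e1 e2 e3 : {set T}) : e1 \in E -> e2 \in E -> e3 \in E ->
  e1 \subset A -> e2 \subset A -> e3 \subset A ->
  e1 != e2 -> e1 != e3 -> e2 != e3 -> 3 <= edges_in E A.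
Proof.
move=> E1 E2 E3 S1 S2 S3 n12 n13 n23; rewrite /edges_in.
rewrite -(card3 n12 n13 n23); apply: subset_leq_card; apply/subsetP => e.
by rewrite !inE => /orP[/orP[]|] /eqP ->; rewrite ?E1 ?E2 ?E3.
Qed.

Lemma K4m p q r s : uniq [:: p; q; r; s] ->
  3 <= ([set p; q; r] \in E) + ([set p; q; s] \in E) + ([set p; r; s] \in E)
        + ([set q; r; s] \in E) ->
  spans_K4minus E [set p; q; r; s].
Proof.
move=> U; have C4 := card4 U.
move: U; rewrite /= !inE !negb_or => /andP[/and3P[ab ac ad] /andP[/andP[bc bd] /andP[cd _]]].
rewrite /spans_K4minus C4 eqxx /=.
have sub : forall a b c, a \in [set p; q; r; s] -> b \in [set p; q; r; s] ->
   c \in [set p; q; r; s] -> [set a; b; c] \subset [set p; q; r; s].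
  move=> a b c Ha Hb Hc; apply/subsetP => z; move: Ha Hb Hc; rewrite !inE => Ha Hb Hc.
  by move=> /orP[/orP[]|] /eqP ->.
have m1 : p \in [set p; q; r; s] by rewrite !inE eqxx.
have m2 : q \in [set p; q; r; s] by rewrite !inE eqxx !orbT.
have m3 : r \in [set p; q; r; s] by rewrite !inE eqxx !orbT.
have m4 : s \in [set p; q; r; s] by rewrite !inE eqxx !orbT.
have n1 : [set p; q; r] != [set p; q; s] by apply: (@set_neq _ _ s); rewrite !inE; ne_rw.
have n2 : [set p; q; r] != [set p; r; s] by apply: (@set_neq _ _ s); rewrite !inE; ne_rw.
have n3 : [set p; q; r] != [set q; r; s] by apply: (@set_neq _ _ s); rewrite !inE; ne_rw.
have n4 : [set p; q; s] != [set p; r; s] by apply: (@set_neq _ _ r); rewrite !inE; ne_rw.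
have n5 : [set p; q; s] != [set q; r; s] by apply: (@set_neq _ _ r); rewrite !inE; ne_rw.
have n6 : [set p; r; s] != [set q; r; s] by apply: (@set_neq _ _ q); rewrite !inE; ne_rw.
case E1: ([set p; q; r] \in E); case E2: ([set p; q; s] \in E);
case E3: ([set p; r; s] \in E); case E4: ([set q; r; s] \in E) => //= _;
  first [ by apply: (edges3 (e1:=[set p; q; r]) (e2:=[set p; q; s]) (e3:=[set p; r; s])) => //; apply: sub
        | by apply: (edges3 (e1:=[set p; q; r]) (e2:=[set p; q; s]) (e3:=[set q; r; s])) => //; apply: sub
        | by apply: (edges3 (e1:=[set p; q; r]) (e2:=[set p; r; s]) (e3:=[set q; r; s])) => //; apply: sub
        | by apply: (edges3 (e1:=[set p; q; s]) (e2:=[set p; r; s]) (e3:=[set q; r; s])) => //; apply: sub ].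
Qed.

Lemma K43 p q r s : uniq [:: p; q; r; s] ->
  [set p; q; r] \in E -> [set p; q; s] \in E -> [set p; r; s] \in E ->
  [set q; r; s] \in E -> is_K43 E [set p; q; r; s].
Proof.
move=> U E1 E2 E3 E4; have C4 := card4 U.
move: U; rewrite /= !inE !negb_or => /andP[/and3P[ab ac ad] /andP[/andP[bc bd] /andP[cd _]]].
rewrite /is_K43 C4 eqxx /=; apply/forallP => t; apply/implyP => /andP[tK /eqP t3].
set K := [set p; q; r; s] in tK C4 *.
have : #|K :\: t| == 1 by rewrite cardsDS // C4 t3.
move=> /cards1P [w Hw].
have tE : t = K :\: [set w].
  by rewrite -Hw setDDr setDv set0U; apply/esym/setIidPr.
have wK : w \in K.
  have : w \in K :\: t by rewrite Hw set11.
  by rewrite inE => /andP[].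
move: wK; rewrite tE /K !inE => /orP[/orP[/orP[]|]|] /eqP ->.
- by rewrite (_ : _ :\: _ = [set q; r; s]) //; apply/setP=> z; rewrite !inE; memcase z.
- by rewrite (_ : _ :\: _ = [set p; r; s]) //; apply/setP=> z; rewrite !inE; memcase z.
- by rewrite (_ : _ :\: _ = [set p; q; s]) //; apply/setP=> z; rewrite !inE; memcase z.
- by rewrite (_ : _ :\: _ = [set p; q; r]) //; apply/setP=> z; rewrite !inE; memcase z.
Qed.

Lemma card_sumI (S P : {set T}) : #|S :&: P| = \sum_(v in P) (v \in S).
Proof.
rewrite -sum1_card big_mkcond [RHS]big_mkcond /=; apply: eq_bigr => i _.
by rewrite inE; case: (i \in S); case: (i \in P).
Qed.

End Gen.


Ltac uniqs := rewrite /= !inE !negb_or -!andbA; repeat (case/andP => ?); move=> ?.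
Ltac fin := repeat (match goal with |- context [(?a \in ?S)] => case: (a \in S) end); vm_compute; intuition (try discriminate).

Section Main.
Variables (T : finType) (E : {set {set T}}) (hE : is_3graph E) (X Y : {set T})
 (hXY : [disjoint X & Y]) (hU : X :|: Y = [set: T]) (x x' y1 y2 : T)
 (xX : x \in X) (x'X : x' \in X) (y1Y : y1 \in Y) (y2Y : y2 \in Y)
 (e1 : [set x; y1; y2] \in E) (e2 : [set x; x'; y1] \in E) (e3 : [set x; x'; y2] \in E).

Lemma nXY v : v \in Y -> v \notin X.
Proof. by move=> vY; rewrite (disjointFl hXY vY). Qed.
Lemma nYX v : v \in X -> v \notin Y.
Proof. by move=> vX; rewrite (disjointFr hXY vX). Qed.
Lemma XorY v : (v \in X) || (v \in Y).
Proof. have : v \in X :|: Y by rewrite hU inE. by rewrite inE. Qed.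
Lemma neXY v w : v \in X -> w \in Y -> v != w.
Proof. by move=> vX wY; apply: contraTneq vX => ->; rewrite nXY. Qed.

Lemma nxy1 : x != y1. Proof. exact: neXY. Qed.
Lemma nxy2 : x != y2. Proof. exact: neXY. Qed.
Lemma nx'y1 : x' != y1. Proof. exact: neXY. Qed.
Lemma nx'y2 : x' != y2. Proof. exact: neXY. Qed.
Lemma nxx' : x != x'. Proof. by case/and3P: (tri_neq hE e2). Qed.
Lemma ny1y2 : y1 != y2. Proof. by case/and3P: (tri_neq hE e1). Qed.
Lemma y1nX : y1 \notin X. Proof. exact: nXY. Qed.
Lemma y2nX : y2 \notin X. Proof. exact: nXY. Qed.
Lemma xnY : x \notin Y. Proof. exact: nYX. Qed.
Lemma x'nY : x' \notin Y. Proof. exact: nYX. Qed.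

Ltac facts := move: nxy1 nxy2 nx'y1 nx'y2 nxx' ny1y2 y1nX y2nX xnY x'nY xX x'X y1Y y2Y
  => ? ? ? ? ? ? ? ? ? ? ? ? ? ?.

Local Notation F := [set x; x'; y1; y2].
Local Notation A := (nbh E x y1).
Local Notation A' := (nbh E x' y1).
Local Notation B := (nbh E x y2).
Local Notation B' := (nbh E x' y2).
Local Notation C := (nbh E y1 y2).
Local Notation D := (nbh E x x').

Definition Vb := [set v | (v \notin F) && spans_bridge1 E X Y (v |: F)].
Definition K1 := [set v in Y | (v \notin F) && is_K43 E [set x; x'; y1; v]].
Definition K2 := [set v in X | (v \notin F) && is_K43 E [set x; y1; y2; v]].
Definition bset := [set Z : {set T} | spans_bridge1 E X Y Z & F \subset Z].
Definition kset := [set K : {set T} | [&& is_K43 E K, #|K :&: X| == 2%N,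
                                 #|K :&: Y| == 2%N & #|K :&: F| == 3%N]].

Lemma bridge_of p q r u w : uniq [:: p; q; r; u; w] -> u \in X -> w \in Y ->
  spans_K4minus E [set p; q; r; u] -> spans_K4minus E [set p; q; r; w] ->
  spans_bridge1 E X Y [set p; q; r; u; w].
Proof.
move=> U uX wY H1 H2.
apply/existsP; exists u; rewrite uX /=; apply/existsP; exists w; rewrite wY /=.
apply/existsP; exists [set p; q; r].
apply/andP; split; last by apply/eqP; seteq.
move: U; uniqs.
rewrite /connector1; apply/and4P; split.
- rewrite -setI_eq0; apply/eqP/setP => z; rewrite !inE; memcase z.
- by rewrite card3.
- by rewrite (_ : u |: _ = [set p; q; r; u]) //; seteq.
- by rewrite (_ : w |: _ = [set p; q; r; w]) //; seteq.
Qed.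

Ltac vnf vF := move: vF; rewrite !inE !negb_or -!andbA; repeat (case/andP => ?); move=> ?.

Lemma br1 v : v \in X -> v \notin F -> 2 <= (v \in A) + (v \in A') + (v \in D) -> v \in Vb.
Proof.
move=> vX vF H; rewrite inE vF /=.
rewrite (_ : v |: F = [set x; x'; y1; v; y2]); last by seteq.
facts; vnf vF.
apply: bridge_of => //; first by rewrite /= !inE !negb_or; ne_rw.
- apply: K4m => //; first by rewrite /= !inE !negb_or; ne_rw.
  by rewrite e2; move: H; rewrite !inE; fin.
- apply: K4m => //; first by rewrite /= !inE !negb_or; ne_rw.
  by rewrite e1 e2 e3; fin.
Qed.


Lemma e1' : [set x; y2; y1] \in E.
Proof. by rewrite (_ : [set x; y2; y1] = [set x; y1; y2]) //; seteq. Qed.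
Lemma e2' : [set x; y1; x'] \in E.
Proof. by rewrite (_ : [set x; y1; x'] = [set x; x'; y1]) //; seteq. Qed.
Lemma e3' : [set x; y2; x'] \in E.
Proof. by rewrite (_ : [set x; y2; x'] = [set x; x'; y2]) //; seteq. Qed.

Lemma br2 v : v \in X -> v \notin F -> 2 <= (v \in D) + (v \in B) + (v \in B') -> v \in Vb.
Proof.
move=> vX vF H; rewrite inE vF /=.
rewrite (_ : v |: F = [set x; x'; y2; v; y1]); last by seteq.
facts; vnf vF.
apply: bridge_of => //; first by rewrite /= !inE !negb_or; ne_rw.
- apply: K4m => //; first by rewrite /= !inE !negb_or; ne_rw.
  by rewrite e3; move: H; rewrite !inE; fin.
- apply: K4m => //; first by rewrite /= !inE !negb_or; ne_rw.
  by rewrite e1' e2 e3; fin.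
Qed.

Lemma br3 v : v \in Y -> v \notin F -> 2 <= (v \in A) + (v \in B) + (v \in C) -> v \in Vb.
Proof.
move=> vY vF H; rewrite inE vF /=.
rewrite (_ : v |: F = [set x; y1; y2; x'; v]); last by seteq.
facts; vnf vF.
apply: bridge_of => //; first by rewrite /= !inE !negb_or; ne_rw.
- apply: K4m => //; first by rewrite /= !inE !negb_or; ne_rw.
  by rewrite e1 e2' e3'; fin.
- apply: K4m => //; first by rewrite /= !inE !negb_or; ne_rw.
  by rewrite e1; move: H; rewrite !inE; fin.
Qed.

Lemma kk1 v : v \in Y -> v \notin F -> v \in A -> v \in A' -> v \in D -> v \in K1.
Proof.
move=> vY vF HA HA' HD; rewrite inE vY vF /=.
facts; vnf vF.
apply: K43 => //; first by rewrite /= !inE !negb_or; ne_rw.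
- by move: HD; rewrite inE.
- by move: HA; rewrite inE.
- by move: HA'; rewrite inE.
Qed.

Lemma kk2 v : v \in X -> v \notin F -> v \in A -> v \in B -> v \in C -> v \in K2.
Proof.
move=> vX vF HA HB HC; rewrite inE vX vF /=.
facts; vnf vF.
apply: K43 => //; first by rewrite /= !inE !negb_or; ne_rw.
- by move: HA; rewrite inE.
- by move: HB; rewrite inE.
- by move: HC; rewrite inE.
Qed.

Lemma cardVb : #|Vb| <= #|bset|.
Proof.
rewrite -(@card_in_imset _ _ (fun v => v |: F)).
  apply: subset_leq_card; apply/subsetP => Z /imsetP [v].
  rewrite inE => /andP[_ Hb] ->; by rewrite inE Hb subsetUr.
move=> v w; rewrite !inE => /andP[vF _] /andP[wF _] e.
have : v \in w |: F by rewrite -e setU11.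
by rewrite !inE (negbTE vF) orbF => /eqP.
Qed.

Lemma cardK1 : #|K1| <= #|kset|.
Proof.
rewrite -(@card_in_imset _ _ (fun v => [set x; x'; y1; v])).
  apply: subset_leq_card; apply/subsetP => Z /imsetP [v].
  rewrite inE => /andP[vY /andP[vF Hk]] ->; rewrite inE Hk /=.
  have vnX := nXY vY; facts; vnf vF.
  apply/and3P; split.
  - rewrite (_ : _ :&: X = [set x; x']) ?cards2 ?nxx' //.
    apply/setP => z; rewrite !inE; memcase z.
  - rewrite (_ : _ :&: Y = [set y1; v]) ?cards2; last first.
      apply/setP => z; rewrite !inE; memcase z.
    by rewrite eq_sym; ne_rw.
  - rewrite (_ : _ :&: _ = [set x; x'; y1]) ?card3 //.
    apply/setP => z; rewrite !inE; memcase z.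
move=> v w; rewrite !inE => /andP[_ /andP[vF _]] /andP[_ /andP[wF _]] e.
have : v \in [set x; x'; y1; w] by rewrite -e !inE eqxx orbT.
move: vF; rewrite !inE !negb_or -!andbA => /and4P[/negbTE -> /negbTE -> /negbTE -> _].
by move=> /eqP.
Qed.

Lemma cardK2 : #|K2| <= #|kset|.
Proof.
rewrite -(@card_in_imset _ _ (fun v => [set x; y1; y2; v])).
  apply: subset_leq_card; apply/subsetP => Z /imsetP [v].
  rewrite inE => /andP[vX /andP[vF Hk]] ->; rewrite inE Hk /=.
  have vnY := nYX vX; facts; vnf vF.
  apply/and3P; split.
  - rewrite (_ : _ :&: X = [set x; v]) ?cards2; last first.
      apply/setP => z; rewrite !inE; memcase z.
    by ne_rw.
  - rewrite (_ : _ :&: Y = [set y1; y2]) ?cards2 ?ny1y2 //.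
    apply/setP => z; rewrite !inE; memcase z.
  - rewrite (_ : _ :&: _ = [set x; y1; y2]) ?card3 //.
    apply/setP => z; rewrite !inE; memcase z.
move=> v w; rewrite !inE => /andP[_ /andP[vF _]] /andP[_ /andP[wF _]] e.
have : v \in [set x; y1; y2; w] by rewrite -e !inE eqxx orbT.
move: vF; rewrite !inE !negb_or -!andbA => /and4P[/negbTE -> _ /negbTE -> /negbTE ->].
by move=> /eqP.
Qed.


Lemma notF_X v : v \in X -> v != x -> v != x' -> v \notin F.
Proof.
move=> vX a b; have c := neXY vX y1Y; have d := neXY vX y2Y.
by rewrite !inE; ne_rw.
Qed.
Lemma notF_Y v : v \in Y -> v != y1 -> v != y2 -> v \notin F.
Proof.
move=> vY a b; have c := neXY xX vY; have d := neXY x'X vY.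
by rewrite !inE; ne_rw.
Qed.

Lemma P1 v : v \in X -> (v \in A) + (v \in A') + (v \in D) <= 1 + 2 * (v \in Vb).
Proof.
move=> vX; case: (eqVneq v x) => [->|vx].
  by rewrite (negbTE (nbh_l hE _ _)) (negbTE (nbh_l hE _ _)); fin.
case: (eqVneq v x') => [->|vx'].
  by rewrite (negbTE (nbh_l hE x' _)) (negbTE (nbh_r hE x _)); fin.
have := br1 vX (notF_X vX vx vx'); fin.
Qed.

Lemma P2 v : v \in Y ->
  (v \in A) + (v \in A') + (v \in D) + (v == y1) <= 2 + (v \in K1) + (v == y2).
Proof.
move=> vY; have := ny1y2; case: (eqVneq v y1) => [->|vy1] n12.
  by rewrite (negbTE (nbh_r hE x _)) (negbTE (nbh_r hE x' _)) (negbTE n12); fin.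
case: (eqVneq v y2) => [->|vy2].
  by fin.
have := kk1 vY (notF_Y vY vy1 vy2); fin.
Qed.

Lemma P3 v : v \in Y -> (v \in A) + (v \in B) + (v \in C) <= 1 + 2 * (v \in Vb).
Proof.
move=> vY; case: (eqVneq v y1) => [->|vy1].
  by rewrite (negbTE (nbh_r hE x _)) (negbTE (nbh_l hE y1 _)); fin.
case: (eqVneq v y2) => [->|vy2].
  by rewrite (negbTE (nbh_r hE x y2)) (negbTE (nbh_r hE y1 _)); fin.
have := br3 vY (notF_Y vY vy1 vy2); fin.
Qed.

Lemma P4 v : v \in X ->
  (v \in A) + (v \in B) + (v \in C) + (v \in D) + (v == x)
    <= 2 + 2 * (v \in Vb) + (v \in K2) + (v == x').
Proof.
move=> vX; have := nxx'; case: (eqVneq v x) => [->|vx] nn.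
  by rewrite (negbTE (nbh_l hE x y1)) (negbTE (nbh_l hE x y2)) (negbTE (nbh_l hE x x')) (negbTE nn); fin.
case: (eqVneq v x') => [->|vx'].
  by rewrite (negbTE (nbh_r hE x x')); fin.
have vF := notF_X vX vx vx'.
have := br1 vX vF; have := br2 vX vF; have := kk2 vX vF; fin.
Qed.

Lemma P4' v : v \in X ->
  (v \in A) + (v \in B) + (v \in C) + (v == x) <= 2 + (v \in K2) + (v == x').
Proof.
move=> vX; have := nxx'; case: (eqVneq v x) => [->|vx] nn.
  by rewrite (negbTE (nbh_l hE x y1)) (negbTE (nbh_l hE x y2)) (negbTE nn); fin.
case: (eqVneq v x') => [->|vx'].
  by fin.
have vF := notF_X vX vx vx'.
have := kk2 vX vF; fin.
Qed.

Lemma P5 : A :&: X :&: (A' :&: X) \subset Vb.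
Proof.
apply/subsetP => v; rewrite !in_setI => /andP[/andP[HA vX] /andP[HA' _]].
case: (eqVneq v x) => [e|vx]; first by move: HA; rewrite e (negbTE (nbh_l hE x y1)).
case: (eqVneq v x') => [e|vx']; first by move: HA'; rewrite e (negbTE (nbh_l hE x' y1)).
have := br1 vX (notF_X vX vx vx'); rewrite HA HA' /=.
by move=> H; apply: H; case: (v \in D).
Qed.


Lemma sum_eq1 (P : {set T}) a : a \in P -> \sum_(v in P) (v == a : nat) = 1.
Proof.
move=> aP; rewrite (bigD1 a) //= eqxx big1 // => i /andP[_ /negbTE ->] //.
Qed.

Lemma sumS (S P : {set T}) : \sum_(v in P) (v \in S : nat) <= #|S|.
Proof. by rewrite -card_sumI; apply/subset_leq_card/subsetIl. Qed.

Lemma G1 : #|A :&: X| + #|A' :&: X| + #|D :&: X| <= #|X| + 2 * #|Vb|.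
Proof.
rewrite !card_sumI -!big_split /=.

apply: leq_trans; first (apply: leq_sum => v vX; exact: P1 vX).
rewrite big_split /= sum1_card -big_distrr /= leq_add2l leq_mul2l sumS orbT //.
Qed.

Lemma G2 : #|A :&: Y| + #|A' :&: Y| + #|D :&: Y| <= 2 * #|Y| + #|K1|.
Proof.
have H : \sum_(v in Y) ((v \in A) + (v \in A') + (v \in D) + (v == y1))
   <= \sum_(v in Y) (2 + (v \in K1) + (v == y2)).
  by apply: leq_sum => v vY; exact: P2.
move: H; rewrite 3!big_split /= 2!big_split /= !sum_eq1 // leq_add2r.
rewrite -!card_sumI sum_nat_const mulnC => H; apply: leq_trans H _.
by rewrite leq_add2l subset_leq_card // subsetIl.
Qed.

Lemma G3 : #|A :&: Y| + #|B :&: Y| + #|C :&: Y| <= #|Y| + 2 * #|Vb|.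
Proof.
rewrite !card_sumI -!big_split /=.
apply: leq_trans; first (apply: leq_sum => v vY; exact: P3 vY).
rewrite big_split /= sum1_card -big_distrr /= leq_add2l leq_mul2l sumS orbT //.
Qed.

Lemma G4 : #|A :&: X| + #|B :&: X| + #|C :&: X| + #|D :&: X| <= 2 * #|X| + 2 * #|Vb| + #|K2|.
Proof.
have H : \sum_(v in X) ((v \in A) + (v \in B) + (v \in C) + (v \in D) + (v == x))
   <= \sum_(v in X) (2 + 2 * (v \in Vb) + (v \in K2) + (v == x')).
  by apply: leq_sum => v vX; exact: P4.
move: H; rewrite 4!big_split /= 3!big_split /= !sum_eq1 // leq_add2r.
rewrite -big_distrr /= -!card_sumI sum_nat_const mulnC => H; apply: leq_trans H _.
apply: leq_add; [apply: leq_add => //; apply: leq_mul => //|];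
  exact/subset_leq_card/subsetIl.
Qed.

Lemma G4' : #|A :&: X| + #|B :&: X| + #|C :&: X| <= 2 * #|X| + #|K2|.
Proof.
have H : \sum_(v in X) ((v \in A) + (v \in B) + (v \in C) + (v == x))
   <= \sum_(v in X) (2 + (v \in K2) + (v == x')).
  by apply: leq_sum => v vX; exact: P4'.
move: H; rewrite 3!big_split /= 2!big_split /= !sum_eq1 // leq_add2r.
rewrite -!card_sumI sum_nat_const mulnC => H; apply: leq_trans H _.
by rewrite leq_add2l subset_leq_card // subsetIl.
Qed.

Lemma G5 : #|A :&: X :&: (A' :&: X)| <= #|Vb|.
Proof. exact: subset_leq_card P5. Qed.

Lemma split_card (S : {set T}) : #|S| = #|S :&: X| + #|S :&: Y|.
Proof.
rewrite -(cardsID X S); congr (_ + _); apply: eq_card => z; rewrite !inE.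
by case: (boolP (z \in X)) => zX /=; [rewrite (negbTE (nYX zX)) andbF | move: (XorY z); rewrite (negbTE zX)=> /= ->; rewrite andbT].
Qed.

Lemma cardXY : #|X| + #|Y| = #|T|.
Proof. by rewrite -cardsT (split_card [set: T]) !setTI. Qed.


Lemma all_facts :
  [/\ #|A :&: X| + #|A' :&: X| + #|D :&: X| <= #|X| + 2 * #|bset|,
      #|A :&: Y| + #|A' :&: Y| + #|D :&: Y| <= 2 * #|Y| + #|kset|,
      #|A :&: Y| + #|B :&: Y| + #|C :&: Y| <= #|Y| + 2 * #|bset|,
      #|A :&: X| + #|B :&: X| + #|C :&: X| + #|D :&: X| <= 2 * #|X| + 2 * #|bset| + #|kset| &
      #|A :&: X| + #|B :&: X| + #|C :&: X| <= 2 * #|X| + #|kset| ] /\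
  [/\ #|A :&: X :&: (A' :&: X)| <= #|bset|,
      #|A| = #|A :&: X| + #|A :&: Y|,
      #|A'| = #|A' :&: X| + #|A' :&: Y|,
      #|B| = #|B :&: X| + #|B :&: Y| &
      #|C| = #|C :&: X| + #|C :&: Y| ] /\
  #|D| = #|D :&: X| + #|D :&: Y| /\ #|X| + #|Y| = #|T|.
Proof.
have hb := cardVb; have k1 := cardK1; have k2 := cardK2.
split; last split; last split.
3: exact: (split_card (nbh E x x')).
3: exact: cardXY.
2: by split; [exact: leq_trans G5 _|exact: (split_card (nbh E x y1))|exact: (split_card (nbh E x' y1))|exact: (split_card (nbh E x y2))|exact: (split_card (nbh E y1 y2))].
split.
- apply: leq_trans G1 _; rewrite leq_add2l; exact: leq_mul.
- apply: leq_trans G2 _; rewrite leq_add2l //.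
- apply: leq_trans G3 _; rewrite leq_add2l; exact: leq_mul.
- apply: leq_trans G4 _; apply: leq_add => //; apply: leq_add => //; exact: leq_mul.
- apply: leq_trans G4' _; rewrite leq_add2l //.
Qed.

End Main.

End Helpers.
Import Helpers.

Local Open Scope ring_scope.

Theorem lemma5p11 (R : realFieldType) (gamma : R) (T : finType)
    (E : {set {set T}}) (X Y : {set T}) (x x' y1 y2 : T) :
  0 < gamma ->
  is_3graph E ->
  (forall u v : T, u != v -> (2^-1 - gamma) * #|T|%:R <= #|nbh E u v|%:R) ->
  [disjoint X & Y] -> X :|: Y = [set: T] ->
  x \in X -> x' \in X -> y1 \in Y -> y2 \in Y ->
  [set x; y1; y2] \in E -> [set x; x'; y1] \in E -> [set x; x'; y2] \in E ->
  let n := #|T|%:R in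
  [\/ gamma * n / 4%:R <=
        #|[set Z : {set T} | spans_bridge1 E X Y Z
                            & [set x; x'; y1; y2] \subset Z]|%:R,
      gamma * n / 4%:R <=
        #|[set K : {set T} | [&& is_K43 E K, #|K :&: X| == 2%N,
                                 #|K :&: Y| == 2%N &
                                 #|K :&: [set x; x'; y1; y2]| == 3%N]]|%:R
    | [/\ (2^-1 - 15%:R * gamma / 4%:R) * n <= #|X|%:R,
          #|X|%:R <= (2^-1 + 15%:R * gamma / 4%:R) * n,
          (2^-1 - 15%:R * gamma / 4%:R) * n <= #|Y|%:R,
          #|Y|%:R <= (2^-1 + 15%:R * gamma / 4%:R) * n &
          typical E (26%:R * gamma) X Y x x' y1]].
Proof.
move=> gp hE hdeg hXY hU xX x'X y1Y y2Y e1 e2 e3 n.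
have := all_facts hE hXY hU xX x'X y1Y y2Y e1 e2 e3.
rewrite /bset /kset.
case=> [[F1 F2 F3 F4 F4'] [[F5 SA SA' SB SC] [SD SXY]]].
have [hb|hb] := lerP (gamma * n / 4%:R) (#|[set Z : {set T} | spans_bridge1 E X Y Z
                            & [set x; x'; y1; y2] \subset Z]|%:R); first by apply: Or31.
have [hk|hk] := lerP (gamma * n / 4%:R) (#|[set K : {set T} | [&& is_K43 E K, #|K :&: X| == 2%N,
                                 #|K :&: Y| == 2%N &
                                 #|K :&: [set x; x'; y1; y2]| == 3%N]]|%:R); first by apply: Or32.
apply: Or33.
have [nxy1 nxy2 nx'y1 nxx' ny1y2] : [/\ x != y1, x != y2, x' != y1, x != x' & y1 != y2].
  by split; [exact: (neXY hXY xX y1Y)|exact: (neXY hXY xX y2Y)|exact: (neXY hXY x'X y1Y)|case/and3P: (tri_neq hE e2)|case/and3P: (tri_neq hE e1)].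
have dA := hdeg _ _ nxy1; have dB := hdeg _ _ nxy2; have dA' := hdeg _ _ nx'y1.
have dD := hdeg _ _ nxx'; have dC := hdeg _ _ ny1y2.
move: F1; rewrite -(ler_nat R) ?natrD ?natrM => F1.
move: F2; rewrite -(ler_nat R) ?natrD ?natrM => F2.
move: F3; rewrite -(ler_nat R) ?natrD ?natrM => F3.
move: F4; rewrite -(ler_nat R) ?natrD ?natrM => F4.
move: F4'; rewrite -(ler_nat R) ?natrD ?natrM => F4'.
move: F5; rewrite -(ler_nat R) ?natrD ?natrM => F5.
move: SA SA' SB SC SD SXY; move=> /(congr1 (fun m => m%:R : R)); rewrite natrD => SA.
move=> /(congr1 (fun m => m%:R : R)); rewrite natrD => SA'.
move=> /(congr1 (fun m => m%:R : R)); rewrite natrD => SB.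
move=> /(congr1 (fun m => m%:R : R)); rewrite natrD => SC.
move=> /(congr1 (fun m => m%:R : R)); rewrite natrD => SD.
move=> /(congr1 (fun m => m%:R : R)); rewrite natrD => SXY.
rewrite /typical /degZ -/n.
have gn : 0 <= gamma * n by apply: mulr_ge0; [exact: ltW | rewrite /n; exact: ler0n].
rewrite -/n in dA dB dA' dD dC SXY.
split; [lra|lra|lra|lra|split; lra].
Qed.
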